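(* Let $p\in\mathcal P$ and assume that both $\Gamma_{\mu(p)}(p)$ and $\Gamma_{\mu(p^r)}(p^r)$ admit an acyclic connected component. Then: (i) $\mu(p)=\mu(p^r)$; (ii) if $\Gamma_{\mu(p)}(p)$ is connected, then $D_{\mu(p)}(p)\cap D_{\mu(p^r)}(p^r)=\varnothing$; (iii) if $\Gamma_{\mu(p)}(p)$ is acyclic, then there is no $x\in N$ with $D_{\mu(p)}(p)=D_{\mu(p^r)}(p^r)=\{x\}$.
   Context: Let $n,h\ge2$, $N=\{1,\dots,n\}$, $H=\{1,\dots,h\}$, $\mathcal P$ the set of $h$-tuples of linear orders on $N$, $p^r$ the profile obtained by reversing each order; $x>_{p_i}y$ means $x\neq y$ and $p_i$ ranks $x$ above $y$; for an integer $\mu\in(h/2,h]$, $x>^p_\mu y$ means $|\{i: x>_{p_i}y\}|\ge\mu$; $D_\mu(p)=\{x\in N: \forall y,\ |\{i: y>_{p_i}x\}|<\mu\}$; $\mu(p)=\min\{\mu\in\mathbb N\cap(h/2,h]: D_\mu(p)\ne\varnothing\}$. $\Gamma_\mu(p)$ is the directed graph $(N,\{(x,y): x>^p_\mu y\})$. Connected components are those of the underlying undirected graph; a directed graph is acyclic if it contains no directed cycle (on $l\ge2$ distinct vertices) as a subgraph. *)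

(* Defs.v *)
From mathcomp Require Import all_boot.
Set Implicit Arguments. Unset Strict Implicit. Unset Printing Implicit Defensive.

(* Voters H = 'I_h, alternatives N = 'I_n.  A profile assigns to each voter i
   a relation [p i], where [p i x y] means "p_i ranks x above y". *)
Definition strict_linear_order (T : finType) (r : rel T) : Prop :=
  [/\ irreflexive r, transitive r & forall x y, x != y -> r x y || r y x].

Definition profile {n h : nat} (p : 'I_h -> rel 'I_n) : Prop :=
  forall i, strict_linear_order (p i).

Definition rev_profile {n h : nat} (p : 'I_h -> rel 'I_n) : 'I_h -> rel 'I_n :=
  fun i x y => p i y x.

Definition gtp {n h : nat} (p : 'I_h -> rel 'I_n) (i : 'I_h) (x y : 'I_n) : bool :=
  (x != y) && p i x y.

Definition nsupp {n h : nat} (p : 'I_h -> rel 'I_n) (x y : 'I_n) : nat :=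
  #|[set i | gtp p i x y]|.

Definition beats {n h : nat} (p : 'I_h -> rel 'I_n) (mu : nat) : rel 'I_n :=
  fun x y => mu <= nsupp p x y.

Definition Dmu {n h : nat} (p : 'I_h -> rel 'I_n) (mu : nat) : {set 'I_n} :=
  [set x | [forall y, nsupp p y x < mu]].

(* mu(p) = min { mu in N cap (h/2, h] : D_mu(p) <> empty }.
   The integers in (h/2, h] are exactly h./2.+1, ..., h (in increasing order);
   the head of the filtered list is the minimum.  The default h is never used
   for genuine profiles (D_h(p) contains the top alternative of p_1). *)
Definition mu_of {n h : nat} (p : 'I_h -> rel 'I_n) : nat :=
  head h [seq m <- iota h./2.+1 (h - h./2) | Dmu p m != set0].

Definition Gamma {n h : nat} (p : 'I_h -> rel 'I_n) (mu : nat) : rel 'I_n :=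
  beats p mu.

Definition undirected (T : finType) (e : rel T) : rel T :=
  fun x y => e x y || e y x.

Definition component (T : finType) (e : rel T) (x : T) : {set T} :=
  [set y | connect (undirected e) x y].

Definition graph_connected (T : finType) (e : rel T) : Prop :=
  forall x y : T, connect (undirected e) x y.

Definition has_dicycle_in (T : finType) (e : rel T) (A : {set T}) : Prop :=
  exists s : seq T, [/\ 2 <= size s, uniq s, {subset s <= A} & cycle e s].

Definition graph_acyclic (T : finType) (e : rel T) : Prop :=
  ~ has_dicycle_in e [set: T].

Definition has_acyclic_component (T : finType) (e : rel T) : Prop :=
  exists x : T, ~ has_dicycle_in e (component e x).

(* Main.v *)
Require Import Defs.
From mathcomp Require Import all_boot.
From mathcomp Require Import zify.

Lemma path_closed (T : finType) (e : rel T) (C : {set T}) :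
  (forall w z, w \in C -> e w z -> z \in C) ->
  forall s z, path e z s -> z \in C -> {subset z :: s <= C}.
Proof.
move=> clC; elim=> [|a s IH] z /=.
  by move=> _ zC w; rewrite inE => /eqP ->.
case/andP=> eza pa zC w; rewrite inE => /orP [/eqP -> //|ws].
exact: (IH a pa (clC _ _ zC eza) w ws).
Qed.

Lemma connect_closed' (T : finType) (e : rel T) (C : {set T}) z w :
  (forall w z, w \in C -> e w z -> z \in C) ->
  connect e z w -> z \in C -> w \in C.
Proof.
move=> clC /connectP [s ps ->] zC.
exact: (@path_closed _ _ _ clC _ _ ps zC _ (mem_last _ _)).
Qed.

Lemma sink_exists (T : finType) (e : rel T) (C : {set T}) x :
  irreflexive e -> x \in C -> (forall w z, w \in C -> e w z -> z \in C) ->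
  ~ has_dicycle_in e C -> exists2 y, y \in C & forall z, ~~ e y z.
Proof.
move=> irr xC clC nocyc.
pose R y := #|[set z | connect e y z]|.
case: (arg_minnP R xC) => y yC ymin.
exists y => // z; apply/negP => eyz.
have zC := clC _ _ yC eyz.
case: (boolP (connect e z y)) => [czy | nczy].
- apply: nocyc; case/connectP: czy => s pth lst.
  case/shortenP: pth lst => s' pth' uq' _ lst'.
  exists (z :: s'); split => //.
  + case: s' lst' {pth' uq'} => [|a s'] /= lst'; last by [].
    by move: eyz; rewrite -lst' irr.
  + exact: (@path_closed _ _ _ clC _ _ pth' zC).
  + by rewrite /cycle rcons_path pth' -lst' eyz.
- have : R z < R y.
    apply: proper_card; apply/properP; split.
      apply/subsetP => w; rewrite !inE => czw.
      by apply: connect_trans czw; apply: connect1.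
    by exists y; rewrite !inE ?connect0.
  by rewrite ltnNge ymin.
Qed.

Arguments sink_exists [T e C x].

Lemma head_filter_iota (P : pred nat) d k : forall a m,
  a <= m < a + k -> P m -> head d (filter P (iota a k)) <= m.
Proof.
elim: k => [|k IH] a m /=; first by move=> /andP[]; lia.
move=> hm Pm; case: ifP => Pa //=; first by case/andP: hm.
apply: IH => //; case/andP: hm => h1 h2.
case: (ltngtP a m) h1 => // [h3 _|h3 _]; first by lia.
by move: Pa; rewrite h3 Pm.
Qed.

Section S.
Variables (n h : nat) (hh : 2 <= h).

Lemma half_lt : h./2.+1 <= h.
Proof. rewrite ltn_half_double -addnn; lia. Qed.

Lemma mu_range (p : 'I_h -> rel 'I_n) : h./2.+1 <= mu_of p <= h.
Proof.
rewrite /mu_of.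
case E: [seq m <- iota h./2.+1 (h - h./2) | Dmu p m != set0] => [|a s] /=.
  by rewrite half_lt leqnn.
have : a \in iota h./2.+1 (h - h./2).
  have : a \in [seq m <- iota h./2.+1 (h - h./2) | Dmu p m != set0].
    by rewrite E inE eqxx.
  by rewrite mem_filter => /andP[].
rewrite mem_iota => /andP[h1 h2]; rewrite h1 /=.
have := half_lt; lia.
Qed.

Lemma mu_min (p : 'I_h -> rel 'I_n) m :
  h./2.+1 <= m <= h -> Dmu p m != set0 -> mu_of p <= m.
Proof.
move=> hm hD; apply: head_filter_iota => //.
have := half_lt; lia.
Qed.

Lemma nsupp_rev (p : 'I_h -> rel 'I_n) x y :
  nsupp (rev_profile p) x y = nsupp p y x.
Proof. by rewrite /nsupp; apply: eq_card => i; rewrite !inE /gtp /rev_profile eq_sym. Qed.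

Lemma gamma_irr (p : 'I_h -> rel 'I_n) : irreflexive (Gamma p (mu_of p)).
Proof.
move=> x; rewrite /Gamma /beats /nsupp.
have -> : [set i | gtp p i x x] = set0.
  by apply/setP => i; rewrite !inE /gtp eqxx.
rewrite cards0; have := mu_range p; lia.
Qed.

Lemma acomp_sink (p : 'I_h -> rel 'I_n) :
  has_acyclic_component (Gamma p (mu_of p)) ->
  exists y, forall z, ~~ Gamma p (mu_of p) y z.
Proof.
case=> x nc.
have [||y _ hy] := sink_exists (x := x) (gamma_irr p) _ _ nc.
- by rewrite inE connect0.
- move=> w z; rewrite !inE => cw ewz.
  by apply: connect_trans cw _; apply: connect1; rewrite /undirected ewz.
by exists y.
Qed.

Lemma sink_Drev (p : 'I_h -> rel 'I_n) mu y :
  (forall z, ~~ Gamma p mu y z) -> y \in Dmu (rev_profile p) mu.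
Proof.
move=> hy; rewrite inE; apply/forallP => z.
by rewrite nsupp_rev ltnNge; apply: hy.
Qed.

Lemma sink_D (p : 'I_h -> rel 'I_n) mu y :
  (forall z, ~~ Gamma (rev_profile p) mu y z) -> y \in Dmu p mu.
Proof.
move=> hy; rewrite inE; apply/forallP => z.
by rewrite ltnNge -nsupp_rev; apply: hy.
Qed.

Lemma isolated_conn (T : finType) (e : rel T) x y :
  (forall z, ~~ undirected e x z) -> connect (undirected e) x y -> y = x.
Proof.
move=> iso /connectP [[|a s] /= ps ->] //.
by case/andP: ps => exa; move: (iso a); rewrite exa.
Qed.

Lemma D_iso (p : 'I_h -> rel 'I_n) mu x :
  x \in Dmu p mu -> x \in Dmu (rev_profile p) mu ->
  forall z, ~~ undirected (Gamma p mu) x z.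
Proof.
rewrite !inE => /forallP h1 /forallP h2 z.
rewrite /undirected /Gamma /beats negb_or -!ltnNge.
by have := h2 z; rewrite nsupp_rev => -> ; rewrite h1.
Qed.

End S.
Arguments mu_range [n h] hh p.
Arguments mu_min [n h] hh p m.
Arguments gamma_irr [n h] hh p.
Arguments acomp_sink [n h] hh p.
Arguments sink_Drev [n h p mu y].
Arguments sink_D [n h p mu y].
Arguments isolated_conn [T e x y].
Arguments D_iso [n h p mu x].

Theorem lemma6 (n h : nat) (hn : 2 <= n) (hh : 2 <= h)
    (p : 'I_h -> rel 'I_n) (hp : profile p) :
  has_acyclic_component (Gamma p (mu_of p)) ->
  has_acyclic_component (Gamma (rev_profile p) (mu_of (rev_profile p))) ->
  [/\ mu_of p = mu_of (rev_profile p),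
      graph_connected (Gamma p (mu_of p)) ->
        Dmu p (mu_of p) :&: Dmu (rev_profile p) (mu_of (rev_profile p)) = set0
    & graph_acyclic (Gamma p (mu_of p)) ->
        ~ (exists x : 'I_n, Dmu p (mu_of p) = [set x] /\
             Dmu (rev_profile p) (mu_of (rev_profile p)) = [set x])].
Proof.
move=> A1 A2.
have other : forall x : 'I_n, exists y : 'I_n, y != x.
  move=> x; have h0 : 0 < n by lia. have h1 : 1 < n by lia.
  case: (eqVneq x (Ordinal h0)) => [->|ne]; last by exists (Ordinal h0); rewrite eq_sym.
  by exists (Ordinal h1).
have Emu : mu_of p = mu_of (rev_profile p).
  have [y1 hy1] := acomp_sink hh _ A1.
  have [y2 hy2] := acomp_sink hh _ A2.
  apply/eqP; rewrite eqn_leq; apply/andP; split.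
  - apply: (mu_min hh) => //; first exact: (mu_range hh).
    by apply/set0Pn; exists y2; apply: sink_D.
  - apply: (mu_min hh) => //; first exact: (mu_range hh).
    by apply/set0Pn; exists y1; apply: sink_Drev.
split => //.
- move=> conn; apply/setP => x; rewrite in_set0 in_setI -Emu.
  apply/negP => /andP [d1 d2].
  have iso := D_iso d1 d2.
  have [y ney] := other x.
  by move: ney; rewrite (isolated_conn iso (conn x y)) eqxx.
- move=> acyc [x [e1 e2]].
  have d1 : x \in Dmu p (mu_of p) by rewrite e1 set11.
  have d2 : x \in Dmu (rev_profile p) (mu_of p) by rewrite Emu e2 set11.
  have iso := D_iso d1 d2.
  have [y ney] := other x.
  have [|||z zC hz] := sink_exists (gamma_irr hh p) (x := y)
     (C := component (Gamma p (mu_of p)) y).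
  + by rewrite inE connect0.
  + move=> w z; rewrite !inE => cw ewz.
    by apply: connect_trans cw _; apply: connect1; rewrite /undirected ewz.
  + case=> s [s2 us sub cs]; apply: acyc; exists s; split => //.
    by move=> w _; rewrite inE.
  have : z \in Dmu (rev_profile p) (mu_of p) by apply: sink_Drev.
  rewrite Emu e2 inE => /eqP zx.
  move: zC; rewrite inE zx => cyx.
  have cxy : connect (undirected (Gamma p (mu_of p))) x y.
    rewrite sym_connect_sym // => a b; by rewrite /undirected orbC.
  by move: ney; rewrite (isolated_conn iso cxy) eqxx.
Qed.
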